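(* For every $n\ge 1$, $$S(C_n)=\sum_{r=1}^{n}(-1)^r\sum_{\substack{k_1+\cdots+k_r=n\\ k_i\ge 1}}\frac{n!}{k_1!\cdots k_r!}\,C_{k_1}\cdots C_{k_r},\qquad S_\sigma(C_n)=\sum_{r=1}^{n}(-1)^r\sum_{\substack{k_1+\cdots+k_r=n\\ k_i\ge 1}}C_{k_1}\cdots C_{k_r}.$$
   Context: Let $k$ be a field of characteristic $0$. Rooted trees are finite and non-planar; $\bullet$ denotes the one-vertex tree. Let $\mathcal H$ be the free commutative $k$-algebra generated by isomorphism classes of rooted trees having at least one edge; its monomials are rooted forests all of whose components have at least one edge, and its unit is identified with $\bullet$. A subforest of a rooted tree $t$ is either the trivial subforest $\bullet$ or a nonempty set of pairwise vertex-disjoint subtrees of $t$, each having at least one edge; it is identified with the product of its components in $\mathcal H$. For a subforest $s$ of $t$, $t/s$ is the rooted tree obtained by contracting each component of $s$ to a single vertex. The coproduct $\Delta$ is the algebra morphism with $\Delta(t)=\sum_{s} s\otimes t/s$ over all subforests $s$ of $t$ (counted as subsets of $t$), making $\mathcal H$ a connected Hopf algebra graded by number of edges, with antipode $S$. For a forest $s=t_1\cdots t_n$, $\sigma(s)=\prod_j|\mathrm{Aut}(t_j)|$; $A_\sigma(s)=\sigma(s)s$ extended linearly; $\Delta_\sigma=(A_\sigma\otimes A_\sigma)\circ\Delta\circ A_\sigma^{-1}$ is another Hopf algebra coproduct on the same algebra, with antipode $S_\sigma=A_\sigma\circ S\circ A_\sigma^{-1}$. $C_n$ is the corolla with $n$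 edges (root joined to $n$ leaves), $C_0=\bullet$. *)

(* Defs.v *)
From HB Require Import structures.
From mathcomp Require Import all_boot all_order all_algebra all_fingroup.
Set Implicit Arguments. Unset Strict Implicit. Unset Printing Implicit Defensive.
Import GRing.Theory.
Local Open Scope ring_scope.

Inductive tree := Node of seq tree.

Definition children (t : tree) : seq tree := let: Node cs := t in cs.

Fixpoint enc (t : tree) : GenTree.tree unit :=
  let: Node cs := t in GenTree.Node 0 (map enc cs).
Fixpoint dec (g : GenTree.tree unit) : tree :=
  match g with
  | GenTree.Leaf _ => Node [::]
  | GenTree.Node _ gs => Node (map dec gs)
  end.
Fixpoint encK (t : tree) : dec (enc t) = t :=
  match t return dec (enc t) = t with
  | Node cs => f_equal Node
      ((fix go (l : seq tree) : map dec (map enc l) = l :=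
          match l return map dec (map enc l) = l with
          | [::] => erefl
          | c :: l' => f_equal2 cons (encK c) (go l')
          end) cs)
  end.
HB.instance Definition _ := Countable.copy tree (can_type encK).

Fixpoint edges (t : tree) : nat :=
  let: Node cs := t in sumn (map (fun c => (edges c).+1) cs).

(* canonical representative of the isomorphism class of a (non-planar) tree:
   children recursively sorted w.r.t. a total order on planar trees *)
Definition tle (a b : tree) : bool := (pickle a <= pickle b)%N.
Fixpoint canon (t : tree) : tree :=
  let: Node cs := t in Node (sort tle (map canon cs)).

(* A forest is a seq of trees; the monomial of H it represents: drop the
   one-vertex components (identified with the unit), and take the multiset of
   isomorphism classes of the remaining components (a sorted canonical seq). *)
Definition mono (f : seq tree) : seq tree :=
  sort tle (map canon [seq t <- f | (0 < edges t)%N]).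

(* basis monomials are represented by forests all of whose components have an edge *)
Definition is_mono (f : seq tree) : bool := all (fun t => (0 < edges t)%N) f.

(* elements of H: formal finite linear combinations of forests *)
Definition formal (k : fieldType) := seq (k * seq tree).

Definition coef (k : fieldType) (x : formal k) (m : seq tree) : k :=
  \sum_(p <- x | mono p.2 == m) p.1.

Definition heq (k : fieldType) (x y : formal k) : Prop :=
  forall m, coef x m = coef y m.

Definition fmul (k : fieldType) (x y : formal k) : formal k :=
  [seq (p.1 * q.1, p.2 ++ q.2) | p <- x, q <- y].

Definition single (k : fieldType) (f : seq tree) : formal k := [:: (1, f)].

Definition eta_eps (k : fieldType) (f : seq tree) : formal k :=
  if f is [::] then single k [::] else [::].

(* A subforest of t corresponds to a subset E' of the edge set of t: its
   components are the connected components of (V(t),E') having at least one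
   edge, and t/s is obtained by contracting the edges of E'.  The empty set
   corresponds to the trivial subforest.
   marks t lists, for every subset of edges of t, the triple
   (component containing the root, other components, contracted tree). *)
Fixpoint marks (t : tree) : seq (tree * seq tree * tree) :=
  let: Node cs := t in
  let fix go (l : seq tree) : seq (seq tree * seq tree * seq tree) :=
    match l with
    | [::] => [:: ([::], [::], [::])]
    | c :: l' =>
        flatten [seq
          flatten [seq
            [seq (if b then
                    (r.1.1 :: x.1.1, r.1.2 ++ x.1.2, children r.2 ++ x.2)
                  else
                    (x.1.1,
                     (if (0 < edges r.1.1)%N then r.1.1 :: r.1.2 else r.1.2) ++ x.1.2,
                     r.2 :: x.2))
            | x <- go l']
          | b <- [:: true; false]]
        | r <- marks c]
    end in
  [seq (Node x.1.1, x.1.2, Node x.2) | x <- go cs].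

(* Delta(t) = sum over subforests s of  s (x) t/s  (as pairs of forests;
   the trivial subforest and the one-vertex quotient are the empty forest = 1) *)
Definition tdelta (t : tree) : seq (seq tree * seq tree) :=
  [seq ((if (0 < edges x.1.1)%N then x.1.1 :: x.1.2 else x.1.2),
        (if (0 < edges x.2)%N then [:: x.2] else [::]))
  | x <- marks t].

Definition fdelta (f : seq tree) : seq (seq tree * seq tree) :=
  foldr (fun t acc => [seq (p.1 ++ q.1, p.2 ++ q.2) | p <- tdelta t, q <- acc])
        [:: ([::], [::])] f.

(* m o (S (x) id) o Delta  and  m o (id (x) S) o Delta on a basis forest *)
Definition conv_left (k : fieldType) (S : seq tree -> formal k) (f : seq tree) : formal k :=
  flatten [seq fmul (S p.1) (single k p.2) | p <- fdelta f].
Definition conv_right (k : fieldType) (S : seq tree -> formal k) (f : seq tree) : formal k :=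
  flatten [seq fmul (single k p.1) (S p.2) | p <- fdelta f].

Fixpoint nverts (t : tree) : nat :=
  let: Node cs := t in (sumn (map nverts cs)).+1.

(* vertices numbered in preorder; parent index of each vertex (root: itself) *)
Fixpoint par_list (t : tree) (off p : nat) : seq nat :=
  let: Node cs := t in
  let fix go (l : seq tree) (o : nat) : seq nat :=
    match l with
    | [::] => [::]
    | c :: l' => par_list c o off ++ go l' (o + nverts c)%N
    end in
  p :: go cs off.+1.

Definition parent (t : tree) (v : 'I_(nverts t)) : 'I_(nverts t) :=
  insubd v (nth 0%N (par_list t 0 0) v).

(* |Aut(t)|: bijections of the vertex set commuting with the parent map
   (i.e. rooted-tree automorphisms) *)
Definition aut_card (t : tree) : nat :=
  #|[set g : {perm 'I_(nverts t)} | [forall v, g (parent v) == parent (g v)]]|.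

Definition sigma (f : seq tree) : nat := \prod_(t <- f) aut_card t.

(* S_sigma = A_sigma o S o A_sigma^{-1}, on a basis forest f *)
Definition Ssig (k : fieldType) (S : seq tree -> formal k) (f : seq tree) : formal k :=
  [seq ((sigma f)%:R^-1 * p.1 * (sigma p.2)%:R, p.2) | p <- S f].

Definition corolla (n : nat) : tree := Node (nseq n (Node [::])).

Definition compositions (n r : nat) : seq (seq nat) :=
  [seq c <- [seq map val (tval t) | t <- enum {: r.-tuple 'I_n.+1}]
   | all (fun i => (0 < i)%N) c && (sumn c == n)].

Definition rhs_S (k : fieldType) (n : nat) : formal k :=
  flatten [seq [seq ((-1) ^+ r * (n`!)%:R / (\prod_(i <- c) i`!)%:R,
                     map corolla c) | c <- compositions n r]
          | r <- iota 1 n].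

Definition rhs_Ssig (k : fieldType) (n : nat) : formal k :=
  flatten [seq [seq ((-1) ^+ r, map corolla c) | c <- compositions n r]
          | r <- iota 1 n].

(* Main.v *)
Require Import Defs.
From HB Require Import structures.
From mathcomp Require Import all_boot all_order all_algebra all_fingroup.
Set Implicit Arguments. Unset Strict Implicit. Unset Printing Implicit Defensive.
Import GRing.Theory.

Lemma tle_total : total tle.
Proof. by move=> a b; rewrite /tle leq_total. Qed.
Lemma tle_trans : transitive tle.
Proof. by move=> a b c; rewrite /tle; apply: leq_trans. Qed.
Lemma tle_anti : antisymmetric tle.
Proof. by move=> a b; rewrite /tle -eqn_leq => /eqP /(pcan_inj (@pickleK _)). Qed.

Lemma sort_eqP (s1 s2 : seq tree) : perm_eq s1 s2 -> sort tle s1 = sort tle s2.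
Proof. by move/(perm_sortP tle_total tle_trans tle_anti). Qed.

Lemma mono_sorted f : sorted tle (mono f).
Proof. exact: sort_sorted tle_total _. Qed.

Lemma sort_mono f : sort tle (mono f) = mono f.
Proof. exact/sorted_sort/mono_sorted/tle_trans. Qed.

Lemma mono_cat a b : mono (a ++ b) = sort tle (mono a ++ mono b).
Proof.
rewrite /mono; apply: sort_eqP.
rewrite filter_cat map_cat; apply: perm_cat; by rewrite perm_sym perm_sort.
Qed.

Lemma mono_nil : mono [::] = [::].
Proof. by []. Qed.

Section SP.
Variable k : fieldType.
Local Open Scope ring_scope.

Definition sP (P : pred (seq tree)) (x : formal k) : k :=
  \sum_(p <- x | P (mono p.2)) p.1.

Lemma sP_cons P p x : sP P (p :: x) = (if P (mono p.2) then p.1 else 0) + sP P x.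
Proof. by rewrite /sP big_cons; case: ifP => _ //; rewrite add0r. Qed.

Lemma sP_cat P x y : sP P (x ++ y) = sP P x + sP P y.
Proof. by rewrite /sP big_cat. Qed.

Lemma sP_flatten P (L : seq (formal k)) : sP P (flatten L) = \sum_(x <- L) sP P x.
Proof. elim: L => [|x L IH]; first by rewrite big_nil /sP big_nil.
by rewrite /= sP_cat big_cons IH. Qed.

Lemma coef_sP x m : coef x m = sP (pred1 m) x.
Proof. by []. Qed.

Lemma sP_U P x (U : seq (seq tree)) : uniq U -> (forall p, p \in x -> mono p.2 \in U) ->
  sP P x = \sum_(m <- U | P m) coef x m.
Proof.
move=> uU; elim: x => [|p x IH] hx.
  by rewrite /sP big_nil big1 // => m _; rewrite /coef big_nil.
rewrite sP_cons IH; last by move=> q hq; apply: hx; rewrite inE hq orbT.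
have hp : mono p.2 \in U by apply: hx; rewrite inE eqxx.
under [X in _ = X]eq_bigr => m _ do rewrite coef_sP sP_cons.
rewrite big_split /=; congr (_ + _).
rewrite big_mkcond (bigD1_seq (mono p.2)) //= eqxx big1 ?addr0.
  by case: (P _).
by move=> m hm; rewrite eq_sym (negbTE hm); case: (P m).
Qed.

Lemma heq_sP x y P : heq x y -> sP P x = sP P y.
Proof.
move=> h; pose U := undup [seq mono p.2 | p <- x ++ y].
have uU : uniq U by rewrite undup_uniq.
rewrite (@sP_U P x U uU); last first.
  by move=> p hp; rewrite mem_undup; apply/mapP; exists p => //; rewrite mem_cat hp.
rewrite (@sP_U P y U uU); last first.
  by move=> p hp; rewrite mem_undup; apply/mapP; exists p => //; rewrite mem_cat hp orbT.
by apply: eq_bigr => m _; rewrite h.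
Qed.

Lemma sP_heq x y : (forall P, sP P x = sP P y) -> heq x y.
Proof. by move=> h m; rewrite !coef_sP h. Qed.

Definition shP (P : pred (seq tree)) (g : seq tree) : pred (seq tree) :=
  fun m => P (sort tle (m ++ mono g)).

Lemma sP_fmul P x g : sP P (fmul x (single k g)) = sP (shP P g) x.
Proof.
elim: x => [|p x IH]; first by rewrite /sP !big_nil.
have -> : fmul (p :: x) (single k g) = (p.1 * 1, p.2 ++ g) :: fmul x (single k g) by [].
by rewrite !sP_cons IH /shP mulr1 mono_cat.
Qed.

Lemma sP_conv_left S P f :
  sP P (conv_left S f) = \sum_(p <- fdelta f) sP (shP P p.2) (S p.1).
Proof. by rewrite /conv_left sP_flatten big_map; apply: eq_bigr => p _; rewrite sP_fmul. Qed.

Lemma sP_shP_nil P x : sP (shP P [::]) x = sP P x.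
Proof. by apply: eq_bigl => p; rewrite /shP mono_nil cats0 sort_mono. Qed.

Lemma sP_single P g : sP P (single k g) = if P (mono g) then 1 else 0.
Proof. by rewrite /single sP_cons /sP big_nil addr0. Qed.

End SP.

Definition leaf := Node [::].

Fixpoint goM (l : seq tree) : seq (seq tree * seq tree * seq tree) :=
  match l with
  | [::] => [:: ([::], [::], [::])]
  | c :: l' =>
        flatten [seq
          flatten [seq
            [seq (if b then
                    (r.1.1 :: x.1.1, r.1.2 ++ x.1.2, children r.2 ++ x.2)
                  else
                    (x.1.1,
                     (if (0 < edges r.1.1)%N then r.1.1 :: r.1.2 else r.1.2) ++ x.1.2,
                     r.2 :: x.2))
            | x <- goM l']
          | b <- [:: true; false]]
        | r <- marks c]
  end.

Lemma marksE cs : marks (Node cs) = [seq (Node x.1.1, x.1.2, Node x.2) | x <- goM cs].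
Proof. by []. Qed.

Fixpoint Al n := if n is n'.+1 then map S (Al n') ++ Al n' else [:: 0%N].

Lemma Al_le n a : a \in Al n -> (a <= n)%N.
Proof.
elim: n a => [|n IH] a /=; first by rewrite inE => /eqP ->.
rewrite mem_cat => /orP [/mapP [b hb ->]|h]; first by apply: IH.
by apply: leqW; apply: IH.
Qed.

Lemma goM_nseq n : goM (nseq n leaf) = [seq (nseq a leaf, [::], nseq (n - a) leaf) | a <- Al n].
Proof.
elim: n => [|n IH] //=.
rewrite IH /= cats0 map_cat -!map_comp; congr (_ ++ _).
rewrite cats0; apply/eq_in_map => a /Al_le ha /=; rewrite subSn //.
Qed.

Lemma edges_corolla n : edges (corolla n) = n.
Proof. by elim: n => //= n; rewrite /corolla /= => ->. Qed.

Lemma tdelta_corolla n : tdelta (corolla n) =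
  [seq ((if (0 < a)%N then [:: corolla a] else [::]),
        (if (0 < n - a)%N then [:: corolla (n - a)] else [::])) | a <- Al n].
Proof.
rewrite /tdelta /corolla marksE goM_nseq -!map_comp.
have E b : sumn [seq (edges c).+1 | c <- nseq b leaf] = b by elim: b => //= ? ->.
by apply: eq_map => a /=; rewrite !E.
Qed.

Lemma fdelta1 t : fdelta [:: t] = tdelta t.
Proof. by rewrite /fdelta /=; elim: (tdelta t) => //= p l ->; rewrite !cats0 -!surjective_pairing. Qed.

Section SumAl. Local Open Scope ring_scope.
Lemma sum_Al (k : fieldType) n (F : nat -> k) :
  \sum_(a <- Al n) F a = \sum_(i < n.+1) F i *+ 'C(n, i).
Proof.
elim: n F => [|n IH] F; first by rewrite big_ord_recl big_ord0 /= big_cons big_nil.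
rewrite /= big_cat big_map /= !IH.
rewrite [in RHS]big_ord_recl /= [in X in _ + X = _]big_ord_recl /=.
under [in RHS]eq_bigr => i _ do rewrite /bump /= binS mulrnDr.
rewrite big_split /= !bin0 addrCA; congr (_ + _).
rewrite addrC; congr (_ + _).
by rewrite [in RHS]big_ord_recr /= bin_small // mulr0n addr0.
Qed.
End SumAl.

Definition pos := fun i : nat => (0 < i)%N.

Lemma sumn_ge (x : nat) c : x \in c -> (x <= sumn c)%N.
Proof.
elim: c => //= y c IH; rewrite inE => /orP [/eqP ->|h]; first exact: leq_addr.
by apply: leq_trans (IH h) _; apply: leq_addl.
Qed.

Lemma size_le_sumn c : all pos c -> (size c <= sumn c)%N.
Proof. elim: c => //= y c IH /andP [hy hc]; rewrite -add1n; apply: leq_add => //; exact: IH. Qed.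

Lemma mem_compositions n r c :
  (c \in compositions n r) = [&& size c == r, all pos c & sumn c == n].
Proof.
rewrite /compositions mem_filter.
rewrite /pos; case: (boolP (all _ c && (sumn c == n))) => [/andP [hp /eqP hs]|hc]; last first.
  by rewrite andbF.
rewrite andbT /=.
apply/mapP/idP => [[t _ ->]|/eqP hr].
  by rewrite size_map size_tuple.
have hsz : size (map (@inord n) c) == r by rewrite size_map hr.
exists (Tuple hsz); first by rewrite mem_enum.
rewrite /= -map_comp -[LHS]map_id; apply/eq_in_map => x hx /=.
by rewrite inordK // ltnS -hs sumn_ge.
Qed.

Lemma uniq_compositions n r : uniq (compositions n r).
Proof.
rewrite /compositions filter_uniq // map_inj_uniq ?enum_uniq //.
by move=> t1 t2 /(inj_map val_inj) /val_inj.
Qed.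

Lemma flatten_uniq_key (T U : eqType) (key : T -> U) (F : U -> seq T) s :
  uniq s -> (forall i, uniq (F i)) -> (forall i x, i \in s -> x \in F i -> key x = i) ->
  uniq (flatten [seq F i | i <- s]).
Proof.
move=> us uF; elim: s us => //= i s IH /andP [his us] hk.
rewrite cat_uniq uF IH //=; last by move=> j x hj; apply: hk; rewrite inE hj orbT.
rewrite andbT; apply/hasPn => x /flatten_mapP [j hj hx].
apply/negP => hxi.
have e1 := hk _ _ (mem_head _ _) hxi.
have e2 : key x = j by apply: hk hx; rewrite inE hj orbT.
by move: his; rewrite -e1 e2 hj.
Qed.

Definition comps n := flatten [seq compositions n r | r <- iota 0 n.+1].

Lemma mem_comps n c : (c \in comps n) = all pos c && (sumn c == n).
Proof.
apply/flatten_mapP/idP => [[r _]|/andP [hp hs]].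
  by rewrite mem_compositions => /and3P [_ -> ->].
exists (size c); last by rewrite mem_compositions eqxx hp hs.
by rewrite mem_iota /= add0n ltnS -(eqP hs) size_le_sumn.
Qed.

Lemma uniq_comps n : uniq (comps n).
Proof.
apply: (@flatten_uniq_key _ _ size); first exact: iota_uniq.
  by move=> r; apply: uniq_compositions.
by move=> r x _; rewrite mem_compositions => /and3P [/eqP].
Qed.

Lemma seq1_uniq (T : eqType) (s : seq T) a : uniq s -> (forall x, (x \in s) = (x == a)) -> s = [:: a].
Proof.
move=> us h; have ha : a \in s by rewrite h.
case: s us h ha => // b s /= /andP [hb us] h _.
have eb : b = a by apply/eqP; rewrite -h inE eqxx.
subst b; case: s hb us h => // c s hb _ h; exfalso.
move: (h c); rewrite !inE eqxx orbT => /esym /eqP ec.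
by move: hb; rewrite ec inE eqxx.
Qed.

Lemma comps0 : comps 0 = [:: [::]].
Proof.
apply: seq1_uniq; first exact: uniq_comps.
move=> x; rewrite mem_comps; case: x => //= y x.
apply/negbTE; rewrite negb_and /pos; case: y => //= y.
by rewrite orbT.
Qed.

Lemma compositions_n0 n : (0 < n)%N -> compositions n 0 = [::].
Proof.
move=> hn; case e: (compositions n 0) => [|c l] //.
have : c \in compositions n 0 by rewrite e inE eqxx.
rewrite mem_compositions => /and3P [/eqP hs _ /eqP hsum].
by move: hsum hn; rewrite (size0nil hs) => <-.
Qed.

Lemma comps_pos n : (0 < n)%N -> comps n = flatten [seq compositions n r | r <- iota 1 n].
Proof. by move=> hn; rewrite /comps /= compositions_n0. Qed.

Lemma comps_split n : (0 < n)%N ->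
  perm_eq (comps n) (flatten [seq [seq rcons c (n - a) | c <- comps a] | a <- iota 0 n]).
Proof.
move=> hn; apply: uniq_perm; first exact: uniq_comps.
  apply: (@flatten_uniq_key _ _ (fun x => n - last 0%N x)); first exact: iota_uniq.
    move=> a; rewrite map_inj_uniq ?uniq_comps //.
    by move=> x y /rcons_inj [].
  move=> a x; rewrite mem_iota add0n /= => ha /mapP [c hc ->]; rewrite last_rcons.
  by rewrite subKn // ltnW.
move=> x; rewrite mem_comps; apply/idP/flatten_mapP.
  case/lastP: x => [|c b]; first by move=> /andP [_ /eqP h]; move: hn; rewrite -h.
  rewrite -cats1 all_cat sumn_cat /= addn0 andbT => /andP [/andP [hc hb] /eqP hs].
  exists (sumn c).
    by rewrite mem_iota add0n /= -hs -{1}(addn0 (sumn c)) ltn_add2l.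
  apply/mapP; exists c; first by rewrite mem_comps hc eqxx.
  by rewrite -hs addKn cats1.
move=> [a]; rewrite mem_iota add0n /= => ha /mapP [c]; rewrite mem_comps => /andP [hc /eqP hs] ->.
rewrite -cats1 all_cat sumn_cat hc /= addn0 hs andbT.
by rewrite /pos subn_gt0 ha subnKC ?eqxx //; apply: ltnW.
Qed.

Section Part1.
Variable k : fieldType.
Hypothesis char0 : [pchar k]%R =i pred0.
Local Open Scope ring_scope.

Definition U n (Q : pred (seq tree)) : k :=
  \sum_(c <- comps n | Q (mono (map corolla c)))
     (-1) ^+ size c * (n`!)%:R / (\prod_(i <- c) i`!)%:R.

Lemma sP_map (f : seq nat -> k) (g : seq nat -> seq tree) s Q :
  sP Q [seq (f c, g c) | c <- s] = \sum_(c <- s | Q (mono (g c))) f c.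
Proof. by rewrite /sP big_map. Qed.

Lemma sP_rhs_S n Q : (0 < n)%N -> sP Q (rhs_S k n) = U n Q.
Proof.
move=> hn; rewrite /rhs_S sP_flatten big_map /U comps_pos // big_flatten big_map.
apply: eq_bigr => r _; rewrite sP_map.
rewrite [LHS]big_seq_cond [RHS]big_seq_cond; apply: eq_bigr => c /andP [hc _].
by move: hc; rewrite mem_compositions => /and3P [/eqP -> _ _].
Qed.

Lemma sP_single_nil Q : sP Q (single k [::]) = U 0 Q.
Proof.
rewrite sP_single /U comps0 big_cons big_nil mono_nil /=.
by case: (Q [::]); rewrite !big_nil ?addr0 // expr0 mul1r divr1.
Qed.

Lemma natf_neq0 m : (0 < m)%N -> (m%:R : k) != 0.
Proof. by move=> hm; rewrite (pcharf0P _).1 // -lt0n. Qed.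

Lemma aux (E C A B P : k) : B != 0 -> -1 * E * (C * (A * B)) / (P * B) = - (E * A / P * C).
Proof.
move=> hB; rewrite invfM mulN1r !mulNr; congr (- _).
rewrite (mulrC P^-1) !mulrA mulfK // -!mulrA; congr (E * _).
by rewrite mulrCA; congr (_ * _); rewrite mulrC.
Qed.

Lemma comb n Q : (0 < n)%N ->
  U n Q = - \sum_(i < n) U i (shP Q [:: corolla (n - i)]) *+ 'C(n, i).
Proof.
move=> hn; rewrite /U (perm_big _ (comps_split hn)) big_flatten big_map.
rewrite -(big_mkord xpredT (fun i => U i (shP Q [:: corolla (n - i)]) *+ 'C(n, i))).
rewrite /index_iota subn0 -sumrN; apply: eq_big_seq => a; rewrite mem_iota add0n /= => ha.
rewrite big_map -sumrMnl -sumrN; apply: eq_big => [c|c hc].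
  by rewrite /shP map_rcons -cats1 mono_cat.
rewrite size_rcons exprS big_rcons /= -(bin_fact (ltnW ha)) !natrM.
by rewrite (aux _ _ _ _ (natf_neq0 (fact_gt0 _))) !mulr_natr.
Qed.

Variable S : seq tree -> formal k.
Hypothesis S_left : forall f, is_mono f -> heq (conv_left S f) (eta_eps k f).

Definition Fc j := if (0 < j)%N then [:: corolla j] else [::].

Lemma S_Fc n Q : sP Q (S (Fc n)) = U n Q.
Proof.
elim/ltn_ind: n Q => n IH Q.
case: n IH => [|n] IH.
  have h := S_left (isT : is_mono [::]).
  rewrite -sP_single_nil -(heq_sP Q h) sP_conv_left /= big_cons big_nil addr0.
  by rewrite sP_shP_nil.
have hh : heq (S [:: corolla n.+1]) (rhs_S k n.+1).
  move=> m; have h := S_left (_ : is_mono [:: corolla n.+1]).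
  have e := h (is_true_true) m.
  rewrite /eta_eps /coef big_nil -/(coef _ m) coef_sP sP_conv_left fdelta1 tdelta_corolla in e.
  rewrite big_map sum_Al big_ord_recr /= subnn sP_shP_nil binn mulr1n in e.
  rewrite !coef_sP sP_rhs_S // comb //.
  move/eqP: e; rewrite addrC addr_eq0 => /eqP ->; congr (- _).
  apply: eq_bigr => i _; rewrite subn_gt0 ltn_ord -/(Fc i) IH //.
by rewrite /Fc /= (heq_sP Q hh) sP_rhs_S.
Qed.

End Part1.

Fixpoint In (c : tree) (l : seq tree) : Prop := if l is d :: l' then d = c \/ In c l' else False.

Lemma mem_In (c : tree) l : c \in l -> In c l.
Proof. elim: l => //= d l IH; rewrite inE => /orP [/eqP ->|h]; [by left | by right; apply: IH]. Qed.

Fixpoint tree_ind' (P : tree -> Prop) (H : forall cs, (forall c, In c cs -> P c) -> P (Node cs)) (t : tree) : P t :=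
  match t with
  | Node cs => H cs ((fix G (l : seq tree) : forall c, In c l -> P c :=
       match l return forall c, In c l -> P c with
       | [::] => fun c hc => False_ind _ hc
       | d :: l' => fun c hc => match hc with
                   | or_introl e => eq_ind d P (tree_ind' H d) c e
                   | or_intror h => G l' c h
                   end
       end) cs)
  end.

Lemma tree_ind2 (P : tree -> Prop) :
  (forall cs, (forall c, c \in cs -> P c) -> P (Node cs)) -> forall t, P t.
Proof.
move=> H; apply: tree_ind' => cs IH; apply: H => c hc; apply: IH; exact: mem_In.
Qed.


Fixpoint gol (l : seq tree) (o off : nat) : seq nat :=
  match l with
  | [::] => [::]
  | c :: l' => par_list c o off ++ gol l' (o + nverts c)%N off
  end.

Lemma par_listE cs off p : par_list (Node cs) off p = p :: gol cs off.+1 off.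
Proof. rewrite /=; congr cons; elim: cs off.+1 => //= c cs IH o; by rewrite IH. Qed.

Lemma size_par_list t off p : size (par_list t off p) = nverts t.
Proof.
move: off p; elim/tree_ind2: t => cs IH off p; rewrite par_listE /=; congr S.
elim: cs IH off.+1 => //= c cs IH' IH o.
by rewrite size_cat IH ?mem_head // IH' // => d hd; apply: IH; rewrite inE hd orbT.
Qed.

Lemma par_list_off t off p :
  par_list t off p = p :: map (addn off) (behead (par_list t 0 0)).
Proof.
move: off p; elim/tree_ind2: t => cs IH off p; rewrite !par_listE /=; congr cons.
have : forall o, gol cs (o + off) off = map (addn off) (gol cs o 0).
  elim: cs IH => //= c cs IH' IH o.
  rewrite map_cat IH ?mem_head // [par_list c o 0]IH ?mem_head //= -map_comp.
  rewrite -addnA (addnC off) addnA IH' //; last by move=> d hd; apply: IH; rewrite inE hd orbT.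
  rewrite addn0; congr (_ :: _ ++ _); apply/eq_map => x /=; by rewrite addnA (addnC off).
by move=> /(_ 1%N) h; exact: h.
Qed.

Definition par t v := nth 0%N (par_list t 0 0) v.
Definition off' (l : seq tree) i := sumn (map nverts (take i l)).

Lemma par0 t : par t 0 = 0%N.
Proof. by case: t. Qed.

Lemma nth_gol l o i j : (i < size l)%N -> (j < nverts (nth leaf l i))%N ->
  nth 0%N (gol l o 0) (off' l i + j) = nth 0%N (par_list (nth leaf l i) (o + off' l i) 0) j.
Proof.
elim: l o i => //= c l IH o [|i] /= hi hj.
  by rewrite /off' /= addn0 add0n nth_cat size_par_list hj.
rewrite nth_cat size_par_list /off' /= -addnA ltnNge leq_addr /= addKn.
by rewrite IH // addnA.
Qed.

Lemma par_node cs i j : (i < size cs)%N -> (j < nverts (nth leaf cs i))%N ->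
  par (Node cs) (off' cs i + j).+1 =
  if j == 0%N then 0%N else (off' cs i + par (nth leaf cs i) j).+1.
Proof.
move=> hi hj; rewrite /par par_listE /= nth_gol // par_list_off.
case: j hj => [|j] hj //=.
rewrite (nth_map 0%N); last by rewrite size_behead size_par_list; case: (nverts _) hj.
by rewrite add1n nth_behead.
Qed.

Fixpoint blk (l : seq tree) (v : nat) : nat * nat :=
  if l is c :: l' then
    (if (v < nverts c)%N then (0%N, v)
     else ((blk l' (v - nverts c)).1.+1, (blk l' (v - nverts c)).2))
  else (0%N, v).

Lemma blk_off l i j : (i < size l)%N -> (j < nverts (nth leaf l i))%N ->
  blk l (off' l i + j) = (i, j).
Proof.
elim: l i => //= c l IH [|i] /= hi hj.
  by rewrite /off' /= add0n hj.
rewrite /off' /= -addnA ltnNge leq_addr /= addKn -/(off' l i) IH //.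
Qed.

Lemma blk_spec l v : (v < sumn (map nverts l))%N ->
  [/\ ((blk l v).1 < size l)%N, ((blk l v).2 < nverts (nth leaf l (blk l v).1))%N
    & v = off' l (blk l v).1 + (blk l v).2].
Proof.
elim: l v => //= c l IH v hv.
case: ifP => h /=; first by rewrite /off' /= add0n.
have hv' : (v - nverts c < sumn (map nverts l))%N.
  by rewrite ltn_subLR // leqNgt h.
case: (IH _ hv') => h1 h2 h3; split => //.
by rewrite /off' /= -addnA -/(off' l _) -h3 subnKC // leqNgt h.
Qed.

Lemma off_lt l i j : (i < size l)%N -> (j < nverts (nth leaf l i))%N ->
  (off' l i + j < sumn (map nverts l))%N.
Proof.
elim: l i => //= c l IH [|i] /= hi hj.
  by rewrite /off' /= add0n; apply: leq_trans hj (leq_addr _ _).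
by rewrite /off' /= -addnA ltn_add2l IH.
Qed.

Lemma nverts_gt0 t : (0 < nverts t)%N.
Proof. by case: t. Qed.

Lemma par_lt t v : (0 < v)%N -> (v < nverts t)%N -> (par t v < v)%N.
Proof.
move: v; elim/tree_ind2: t => cs IH [|w] // _ /= hw.
case: (blk_spec hw) => h1 h2 ->; rewrite par_node //.
have [e|hj] := eqVneq (blk cs w).2 0%N.
  by rewrite e ltn0Sn.
rewrite ltnS ltn_add2l.
by apply: IH => //; [exact: mem_nth | rewrite lt0n].
Qed.

Lemma par_ltN t v : (v < nverts t)%N -> (par t v < nverts t)%N.
Proof.
case: v => [|v] h; first by rewrite par0 nverts_gt0.
by apply: (ltn_trans _ h); apply: par_lt.
Qed.

Lemma par_fix t v : (v < nverts t)%N -> par t v = v -> v = 0%N.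
Proof.
case: v => [|v] // h e; have := par_lt (isT : (0 < v.+1)%N) h.
by rewrite e ltnn.
Qed.

Definition Iso t t' (f : nat -> nat) :=
  [/\ nverts t = nverts t',
      forall v, (v < nverts t)%N -> (f v < nverts t')%N,
      forall u v, (u < nverts t)%N -> (v < nverts t)%N -> f u = f v -> u = v
    & forall v, (v < nverts t)%N -> f (par t v) = par t' (f v)].

Lemma Iso_root t t' f : Iso t t' f -> f 0%N = 0%N.
Proof.
case=> _ hr _ hp; have := hp 0%N (nverts_gt0 t); rewrite par0 => e.
by apply: (par_fix (hr _ (nverts_gt0 t))); rewrite -e.
Qed.

Lemma Iso_comp t1 t2 t3 f g : Iso t1 t2 f -> Iso t2 t3 g -> Iso t1 t3 (g \o f).
Proof.
case=> e1 r1 i1 p1 [e2 r2 i2 p2]; split => //=.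
- by rewrite e1.
- by move=> v hv; apply/r2/r1.
- by move=> u v hu hv /i2 h; apply: i1 => //; apply: h; apply: r1.
- by move=> v hv; rewrite p1 // p2 // r1.
Qed.

Lemma Iso_id t : Iso t t id.
Proof. by split. Qed.

Lemma Iso_sym t t' f : Iso t t' f -> exists g, [/\ Iso t' t g,
  (forall v, (v < nverts t)%N -> g (f v) = v) & (forall v, (v < nverts t')%N -> f (g v) = v)].
Proof.
case=> e r i p.
pose s := map f (iota 0 (nverts t)).
have us : uniq s.
  rewrite map_inj_in_uniq ?iota_uniq // => u v; rewrite !mem_iota /= !add0n; exact: i.
have ss : {subset s <= iota 0 (nverts t')}.
  by move=> x /mapP [u]; rewrite !mem_iota !add0n /= => hu ->; apply: r.
have hs : forall v, (v < nverts t')%N -> v \in s.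
  move=> v hv; have hsz : (size (iota 0 (nverts t')) <= size s)%N by rewrite size_map !size_iota e.
  have [_ eq] := uniq_min_size us ss hsz.
  by rewrite eq mem_iota add0n.
pose g v := index v s.
have fg : forall v, (v < nverts t')%N -> f (g v) = v.
  move=> v hv; have hi : (g v < nverts t)%N by rewrite -(size_iota 0 (nverts t)) -(size_map f) index_mem hs.
  by rewrite -{2}(nth_index 0%N (hs _ hv)) (nth_map 0%N) ?size_iota // nth_iota.
have gr : forall v, (v < nverts t')%N -> (g v < nverts t)%N.
  by move=> v hv; rewrite -(size_iota 0 (nverts t)) -(size_map f) index_mem hs.
have gf : forall v, (v < nverts t)%N -> g (f v) = v.
  by move=> v hv; apply: i => //; [apply/gr/r | rewrite fg //; apply: r].
exists g; split => //; split => //.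
- by move=> u v hu hv h; rewrite -(fg _ hu) -(fg _ hv) h.
- move=> v hv; rewrite -{1}(fg _ hv) -p ?gr // gf //.
  by apply: par_ltN; apply: gr.
Qed.

Definition oz t : 'I_(nverts t) := Ordinal (nverts_gt0 t).
Definition tr t t' (h : nat -> nat) (v : 'I_(nverts t)) : 'I_(nverts t') := insubd (oz t') (h v).
Arguments tr : clear implicits.

Lemma tr_val t t' h v : (h (val v) < nverts t')%N -> val (tr t t' h v) = h v.
Proof. by move=> hv; rewrite /tr val_insubd hv. Qed.

Lemma parent_val t (v : 'I_(nverts t)) : val (parent v) = par t v.
Proof. by rewrite /parent val_insubd -/(par t v) par_ltN. Qed.

Lemma aut_le t t' f : Iso t t' f -> (aut_card t <= aut_card t')%N.
Proof.
move=> hI; have [g [hg gf fg]] := Iso_sym hI.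
case: hI => e r i p; case: hg => e' r' i' p'.
have phi_inj (s : {perm 'I_(nverts t)}) : injective (fun w => tr t t' f (s (tr t' t g w))).
  move=> w1 w2 /(congr1 val); rewrite !tr_val ?r ?ltn_ord // => /i h.
  have /perm_inj : s (tr t' t g w1) = s (tr t' t g w2) by apply: val_inj; apply: h.
  move/(congr1 val); rewrite !tr_val ?r' ?ltn_ord // => hg'.
  by apply: val_inj; rewrite /= -(fg _ (ltn_ord w1)) -(fg _ (ltn_ord w2)) hg'.
pose Phi s := perm (phi_inj s).
rewrite /aut_card.
set A := [set _ | _]; set A' := [set _ | _].
rewrite -(@card_in_imset _ _ Phi A); last first.
  move=> s1 s2 _ _ h; apply/permP => v.
  have := congr1 (fun q : {perm _} => q (tr t t' f v)) h; rewrite /Phi !permE.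
  have -> : tr t' t g (tr t t' f v) = v.
    by apply: val_inj; rewrite !tr_val ?gf ?r ?ltn_ord //; rewrite tr_val ?r ?ltn_ord // gf.
  move/(congr1 val); rewrite !tr_val ?r ?ltn_ord // => /i h'.
  by apply: val_inj; apply: h'.
apply: subset_leq_card; apply/subsetP => _ /imsetP [s hs ->].
move: hs; rewrite !inE => /forallP hs; apply/forallP => w; apply/eqP.
rewrite /Phi !permE; apply: val_inj.
have -> : tr t' t g (parent w) = parent (tr t' t g w).
  have hw : (g w < nverts t)%N := r' _ (ltn_ord w).
  have hpw : (g (par t' w) < nverts t)%N := r' _ (par_ltN (ltn_ord w)).
  by apply: val_inj; rewrite parent_val !tr_val ?parent_val ?hw ?hpw // p'.
rewrite (eqP (hs _)) parent_val !tr_val ?parent_val ?r ?ltn_ord ?p //.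
exact: par_ltN.
Qed.

Lemma aut_iso t t' f : Iso t t' f -> aut_card t = aut_card t'.
Proof.
move=> h; apply/eqP; rewrite eqn_leq (aut_le h) /=.
by have [g [hg _ _]] := Iso_sym h; apply: aut_le hg.
Qed.

Definition nodef (cs ds : seq tree) (I : seq nat) (h : nat -> nat -> nat) (v : nat) : nat :=
  if v is w.+1 then (off' cs (nth 0%N I (blk ds w).1) + h (blk ds w).1 (blk ds w).2).+1 else 0%N.

Lemma iso_node cs ds I h : size ds = size cs -> perm_eq I (iota 0 (size cs)) ->
  (forall k, (k < size ds)%N -> Iso (nth leaf ds k) (nth leaf cs (nth 0%N I k)) (h k)) ->
  Iso (Node ds) (Node cs) (nodef cs ds I h).
Proof.
move=> hsz hI hh.
have sI : size I = size cs by rewrite (perm_size hI) size_iota.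
have uI : uniq I by rewrite (perm_uniq hI) iota_uniq.
have Ik : forall k, (k < size ds)%N -> (nth 0%N I k < size cs)%N.
  move=> k hk; have : nth 0%N I k \in iota 0 (size cs) by rewrite -(perm_mem hI) mem_nth // sI -hsz.
  by rewrite mem_iota add0n.
have eN : nverts (Node ds) = nverts (Node cs).
  rewrite /= ; congr S.
  rewrite -{1}(mkseq_nth leaf ds) /mkseq -map_comp.
  have -> : [seq (nverts \o nth leaf ds) i | i <- iota 0 (size ds)] =
            [seq nverts (nth leaf cs (nth 0%N I k)) | k <- iota 0 (size ds)].
    by apply/eq_in_map => k; rewrite mem_iota add0n /= => hk; case: (hh _ hk).
  rewrite hsz -sI -[in RHS](mkseq_nth leaf cs) /mkseq -map_comp.
  have -> : [seq nverts (nth leaf cs (nth 0%N I k)) | k <- iota 0 (size I)] =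
            [seq nverts (nth leaf cs i) | i <- I].
    by rewrite -[in RHS](mkseq_nth 0%N I) /mkseq -map_comp.
  by apply: perm_sumn; apply: perm_map.
split => //.
- move=> [|w] hw; first exact: nverts_gt0.
  case: (blk_spec hw) => h1 h2 _.
  rewrite /= ltnS; apply: off_lt; first exact: Ik.
  by case: (hh _ h1) => _ r _ _; apply: r.
- move=> [|u] [|v] hu hv //=.
  case: (blk_spec hu) => u1 u2 u3; case: (blk_spec hv) => v1 v2 v3.
  move=> [] e.
  have hu' := hh _ u1; have hv' := hh _ v1.
  case: hu' => _ ru iu _; case: hv' => _ rv iv _.
  have := blk_off (Ik _ u1) (ru _ u2); rewrite e blk_off ?Ik //; last exact: rv.
  case=> eI eh.
  have ek : (blk ds u).1 = (blk ds v).1.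
    by apply/eqP; rewrite -(nth_uniq 0%N _ _ uI) ?sI -?hsz // eI.
  move: eh; rewrite ek => eh.
  have u2' : ((blk ds u).2 < nverts (nth leaf ds (blk ds v).1))%N by rewrite -ek.
  have ej := iv _ _ u2' v2 (esym eh).
  by rewrite u3 v3 ek ej.
move=> [|w] hw; first by rewrite !par0.
case: (blk_spec hw) => h1 h2 h3.
have hk := hh _ h1; case: (hk) => _ rk ik pk.
have r0 := Iso_root hk.
rewrite [in LHS]h3 par_node // /nodef.
have hI1 := Ik _ h1.
rewrite par_node //; last exact: rk.
have [ej|nj] := eqVneq (blk ds w).2 0%N.
  by rewrite ej r0 eqxx.
have -> : (h (blk ds w).1 (blk ds w).2 == 0%N) = false.
  apply/negbTE/eqP => e0; move: nj; rewrite -r0 in e0.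
  by rewrite (ik _ _ h2 (nverts_gt0 _) e0) eqxx.
have hp := par_ltN h2.
by rewrite blk_off // pk.
Qed.

Lemma fchoice (P : nat -> (nat -> nat) -> Prop) n :
  (forall k, (k < n)%N -> exists f, P k f) -> exists h : nat -> nat -> nat, forall k, (k < n)%N -> P k (h k).
Proof.
elim: n => [|n IH] H; first by exists (fun _ => id).
have [h hh] : exists h : nat -> nat -> nat, forall k, (k < n)%N -> P k (h k).
  by apply: IH => k hk; apply: H; apply: ltnW.
have [f hf] := H n (ltnSn n).
exists (fun k => if k == n then f else h k) => k; rewrite ltnS leq_eqVlt.
by case: eqP => [->|_] //= hk; apply: hh.
Qed.

Lemma canon_iso t : exists f, Iso (canon t) t f.
Proof.
elim/tree_ind2: t => cs IH.
have hp : perm_eq (sort tle (map canon cs)) (map canon cs) by rewrite perm_sort.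
have [Is hIs eds] := (perm_iotaP leaf hp).
rewrite size_map in hIs.
have sI : size Is = size cs by rewrite (perm_size hIs) size_iota.
have Ik : forall k, (k < size Is)%N -> (nth 0%N Is k < size cs)%N.
  move=> k hk; have : nth 0%N Is k \in iota 0 (size cs) by rewrite -(perm_mem hIs) mem_nth.
  by rewrite mem_iota add0n.
have hds : size (sort tle (map canon cs)) = size cs by rewrite eds size_map.
have [h hh] : exists h : nat -> nat -> nat, forall k, (k < size (sort tle (map canon cs)))%N ->
   Iso (nth leaf (sort tle (map canon cs)) k) (nth leaf cs (nth 0%N Is k)) (h k).
  apply: (@fchoice (fun k f => Iso (nth leaf (sort tle (map canon cs)) k) (nth leaf cs (nth 0%N Is k)) f)) => k hk.
  have hk' : (k < size Is)%N by rewrite sI -hds.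
  rewrite eds (nth_map 0%N) // (nth_map leaf) ?Ik //.
  by apply: IH; apply: mem_nth; apply: Ik.
by exists (nodef cs (sort tle (map canon cs)) Is h); apply: iso_node.
Qed.

Lemma aut_canon t : aut_card (canon t) = aut_card t.
Proof. by have [f hf] := canon_iso t; apply: aut_iso hf. Qed.

Lemma aut_const t : (forall v, (v < nverts t)%N -> par t v = 0%N) -> aut_card t = (nverts t).-1`!.
Proof.
move=> h; rewrite /aut_card.
have hp : forall v : 'I_(nverts t), parent v = oz t.
  by move=> v; apply: val_inj; rewrite parent_val h.
have E : [set g : {perm 'I_(nverts t)} | [forall v, g (parent v) == parent (g v)]] =i
          perm_on [set~ oz t].
  move=> g; rewrite inE [g \in perm_on _]unfold_in; apply/forallP/idP => [H|H v].
    apply/subsetP => x; rewrite !inE; apply: contra => /eqP ->.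
    by move: (H (oz t)); rewrite !hp.
  rewrite !hp; apply/eqP; apply/eqP/negPn/negP => hg.
  by have := subsetP H (oz t); rewrite !inE eqxx hg => /(_ isT).
by rewrite (eq_card E) card_perm cardsC1 card_ord.
Qed.

Lemma par_corolla n v : par (corolla n) v = 0%N.
Proof.
rewrite /par /corolla par_listE.
have -> : forall o, gol (nseq n leaf) o 0 = nseq n 0%N.
  by elim: n => //= n IH o; rewrite IH.
by case: v => //= v; rewrite nth_nseq; case: ifP.
Qed.

Lemma nverts_corolla n : nverts (corolla n) = n.+1.
Proof. by rewrite /corolla /=; congr S; elim: n => //= n ->. Qed.

Lemma aut_corolla n : aut_card (corolla n) = n`!.
Proof. by rewrite aut_const ?nverts_corolla // => v _; apply: par_corolla. Qed.

Lemma sigma_mono f : sigma (mono f) = sigma f.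
Proof.
rewrite /sigma /mono.
have hp : perm_eq (sort tle [seq canon i | i <- [seq t <- f | (0 < edges t)%N]])
                  [seq canon i | i <- [seq t <- f | (0 < edges t)%N]] by rewrite perm_sort.
rewrite (perm_big _ hp) big_map big_filter big_mkcond /=.
apply: eq_bigr => t _; rewrite aut_canon; case: ifP => // /negbT.
by case: t => [[|c cs]] //= _; rewrite (aut_corolla 0).
Qed.

Section Part2.
Variable k : fieldType.
Hypothesis char0 : [pchar k]%R =i pred0.
Local Open Scope ring_scope.

Lemma sigma_corollas c : sigma (map corolla c) = \prod_(i <- c) i`!.
Proof. by rewrite /sigma big_map; apply: eq_bigr => i _; rewrite aut_corolla. Qed.

Definition V n (Q : pred (seq tree)) : k :=
  \sum_(c <- comps n | Q (mono (map corolla c))) (-1) ^+ size c.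

Lemma sP_rhs_Ssig n Q : (0 < n)%N -> sP Q (rhs_Ssig k n) = V n Q.
Proof.
move=> hn; rewrite /rhs_Ssig sP_flatten big_map /V comps_pos // big_flatten big_map.
apply: eq_bigr => r _; rewrite (@sP_map k (fun _ => (-1) ^+ r)).
rewrite [LHS]big_seq_cond [RHS]big_seq_cond; apply: eq_bigr => c /andP [hc _].
by move: hc; rewrite mem_compositions => /and3P [/eqP -> _ _].
Qed.

Lemma part2 (S : seq tree -> formal k) n : (0 < n)%N ->
  heq (S [:: corolla n]) (rhs_S k n) -> heq (Ssig S [:: corolla n]) (rhs_Ssig k n).
Proof.
move=> hn hS m.
rewrite !coef_sP sP_rhs_Ssig // /sP big_map /=.
have -> : \sum_(p <- S [:: corolla n] | mono p.2 == m)
            ((sigma [:: corolla n])%:R^-1 * p.1 * (sigma p.2)%:R) =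
          (sigma [:: corolla n])%:R^-1 * coef (S [:: corolla n]) m * (sigma m)%:R.
  rewrite /coef big_distrr big_distrl /=; apply: eq_bigr => p /eqP hp.
  by rewrite -(sigma_mono p.2) hp.
rewrite hS coef_sP sP_rhs_S // /U /V big_distrr big_distrl /=.
apply: eq_bigr => c /eqP hc.
rewrite -hc sigma_mono sigma_corollas /sigma big_seq1 aut_corolla.
have eP : (\prod_(i <- c) i`!)%R = (\prod_(i <- c) i`!)%N by [].
have hP : (\prod_(i <- c) i`!)%N%:R != 0 :> k.
  by rewrite (pcharf0P _).1 // -lt0n prodn_gt0 // => i; apply: fact_gt0.
have hF : (n`!)%:R != 0 :> k by rewrite (pcharf0P _).1 // -lt0n fact_gt0.
rewrite eP -mulrA divfK // (mulrC _ (n`!)%:R) mulKf //.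
Qed.
End Part2.

Theorem mainTheorem2 (k : fieldType) (char0 : [pchar k]%R =i pred0)
  (S : seq tree -> formal k)
  (S_iso : forall f g, is_mono f -> is_mono g -> mono f = mono g -> heq (S f) (S g))
  (S_left : forall f, is_mono f -> heq (conv_left S f) (eta_eps k f))
  (S_right : forall f, is_mono f -> heq (conv_right S f) (eta_eps k f))
  (n : nat) (hn : (1 <= n)%N) :
  heq (S [:: corolla n]) (rhs_S k n) /\ heq (Ssig S [:: corolla n]) (rhs_Ssig k n).
Proof.
have h1 : heq (S [:: corolla n]) (rhs_S k n).
  apply: sP_heq => Q; have := S_Fc char0 S_left n Q.
  by rewrite /Fc hn => ->; rewrite sP_rhs_S.
by split => //; apply: part2.
Qed.
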